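(* Let $\mathbf{p}=(p^{(1)},\dots,p^{(n)})\in(0,1)^n$ with $\sum_ip^{(i)}=1$, and let $f_u(C^{(i)},C^{(j)})=p^{(i)}/(p^{(i)}+p^{(j)})$ for distinct $i,j$. For each $a\in[n]$ define the prefix weights $g_a$ on ordered pairs of distinct classes by $g_a(C^{(a)},C^{(b)})=1$ and $g_a(C^{(b)},C^{(a)})=0$ for $b\ne a$, and $g_a(C^{(b)},C^{(c)})=f_u(C^{(b)},C^{(c)})$ for distinct $b,c\ne a$. Then for all distinct $i,j\in[n]$, $$f_u(C^{(i)},C^{(j)})=\sum_{a=1}^n p^{(a)}\,g_a(C^{(i)},C^{(j)}).$$
   Context: $C^{(1)},\dots,C^{(n)}$ are class labels; $f_u$ are the situational expert graph weights and $g_a$ are the weights of the prefix expert graph with prefix $a$. *)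

(* Defs.v *)
From mathcomp Require Import all_boot all_order all_algebra.
Set Implicit Arguments. Unset Strict Implicit. Unset Printing Implicit Defensive.
Import Order.TTheory GRing.Theory Num.Theory.
Local Open Scope ring_scope.

(* Classes C^(1..n) are indexed by 'I_n. *)

Definition f_u (R : fieldType) (n : nat) (p : 'I_n -> R) (i j : 'I_n) : R :=
  p i / (p i + p j).

Definition g_pref (R : fieldType) (n : nat) (p : 'I_n -> R) (a i j : 'I_n) : R :=
  if i == a then 1
  else if j == a then 0
  else f_u p i j.

(* Main.v *)
Require Import Defs.
From mathcomp Require Import all_boot all_order all_algebra.
From mathcomp Require Import ring lra.
Import Order.TTheory GRing.Theory Num.Theory.
Local Open Scope ring_scope.

Theorem lemma9 (R : realFieldType) (n : nat) (p : 'I_n -> R)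
  (hp : forall i, 0 < p i /\ p i < 1)
  (hsum : \sum_(i < n) p i = 1)
  (i j : 'I_n) (hij : i != j) :
  f_u p i j = \sum_(a < n) p a * g_pref p a i j.
Proof.
have hji : (j != i) by rewrite eq_sym.
rewrite (bigD1 i) //= (bigD1 j) //=.
move: hsum; rewrite (bigD1 i) //= (bigD1 j) //= => hsum.
have -> : \sum_(a < n | (a != i) && (a != j)) p a * g_pref p a i j
   = (\sum_(a < n | (a != i) && (a != j)) p a) * f_u p i j.
  rewrite big_distrl /=; apply: eq_bigr => a /andP [ai aj].
  by rewrite /g_pref eq_sym (negbTE ai) eq_sym (negbTE aj).
rewrite /g_pref !eqxx (negbTE hij).
set S := \sum_(a < n | _) p a in hsum *.
have hS : S = 1 - p i - p j by rewrite -hsum; ring.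
rewrite hS /f_u.
have [hi _] := hp i; have [hj _] := hp j.
have hne : p i + p j != 0 by apply/lt0r_neq0; lra.
field; exact: hne.
Qed.
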